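(* Let $m$ be an odd positive integer and $c$ an integer relatively prime to $m$ such that $\sigma_1$ is an integer with $\sigma_1^2\equiv c\pmod m$. Let $u$ be an integer with $2\sigma_1 u\equiv 1\pmod m$, and define $\sigma_{n+1}=(c-\sigma_n^2)u+\sigma_n$ for $n\ge 1$. Then $\{\sigma_n\}_{n\ge1}$ is a Cauchy sequence in $(D_m,d)$.
   Context: $D_m$ is the set of rationals $a/b$ (with $a,b$ coprime integers) such that $\gcd(b,m)=1$. For $a/b\in D_m$ in lowest terms, $|a/b|_m=m^{-k}$ where $k$ is the largest integer with $m^k\mid a$, and $|0|_m=0$; the metric is $d(u,v)=|u-v|_m$. *)

(* Defs.v *)
From mathcomp Require Import all_boot all_order all_algebra.
Set Implicit Arguments. Unset Strict Implicit. Unset Printing Implicit Defensive.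
Import Order.TTheory GRing.Theory Num.Theory.
Local Open Scope ring_scope.

(* m-adic valuation of a nonzero integer a: the largest k with m^k | a.
   For m >= 2 and a <> 0 any such k satisfies m^k <= |a| < |a|+1, so the
   bounded max below is exactly the largest such k. *)
Definition mval (m : nat) (a : int) : nat :=
  (\max_(k < `|a|%N.+1 | (m ^ k %| `|a|%N)%N) k)%N.

Definition inDm (m : nat) (x : rat) : bool := coprime `|denq x|%N m.

Definition madic_norm (m : nat) (x : rat) : rat :=
  if x == 0 then 0 else ((m%:R : rat) ^+ mval m (numq x))^-1.

Definition madic_dist (m : nat) (x y : rat) : rat := madic_norm m (x - y).

Definition madic_cauchy (m : nat) (s : nat -> rat) : Prop :=
  (forall n, inDm m (s n)) /\
  forall eps : rat, 0 < eps -> exists N : nat,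
    forall p q : nat, (N <= p)%N -> (N <= q)%N -> madic_dist m (s p) (s q) < eps.

(* Main.v *)
Require Import Defs.
From mathcomp Require Import all_boot all_order all_algebra.
From mathcomp Require Import ring.
Import Order.TTheory GRing.Theory Num.Theory.
Local Open Scope ring_scope.

Lemma dvdz_pow_le (M : int) (a b : nat) (x : int) :
  (a <= b)%N -> (M ^+ b %| x)%Z -> (M ^+ a %| x)%Z.
Proof.
move=> hab hb; apply: dvdz_trans hb.
by rewrite -(subnKC hab) exprD dvdz_mulr.
Qed.

Lemma inv_pow_bound (m : nat) (d : int) (k : nat) :
  (1 < m)%N -> (m%:Z ^+ k %| d)%Z ->
  madic_norm m (d%:~R) <= ((m%:R : rat) ^+ k)^-1.
Proof.
move=> m1 hd; rewrite /madic_norm.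
have hm0 : (0 : rat) < m%:R by rewrite ltr0n; apply: ltn_trans m1.
case: eqP => [_|/eqP dn0]; first by rewrite invr_ge0 exprn_ge0 // ltW.
have d0 : d != 0 by apply: contraNneq dn0 => ->.
rewrite numq_int.
have hk : (k <= mval m d)%N.
  have hdv : (m ^ k %| `|d|)%N by move: hd; rewrite dvdzE abszX.
  have hle : (m ^ k <= `|d|)%N by apply: dvdn_leq => //; rewrite absz_gt0.
  have kl : (k < `|d|.+1)%N.
    by apply: (leq_trans (ltnW (ltn_expl k m1))).
  exact: (leq_bigmax_cond (Ordinal kl) hdv).
rewrite lef_pV2 ?posrE ?exprn_gt0 //.
by rewrite -!natrX ler_nat leq_pexp2l // ltnW.
Qed.

Theorem mainTheorem9 (m : nat) (c u : int) (sigma : nat -> int) :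
  (0 < m)%N -> odd m -> (1 < m)%N ->
  coprimez c (m%:Z) ->
  (sigma 1%N ^+ 2 == c %[mod m%:Z])%Z ->
  (2 * sigma 1%N * u == 1 %[mod m%:Z])%Z ->
  (forall n : nat, (1 <= n)%N -> sigma n.+1 = (c - sigma n ^+ 2) * u + sigma n) ->
  madic_cauchy m (fun n : nat => (sigma n.+1)%:~R).
Proof.
move=> m0 _ m1 _ h1 h2 hrec.
set M := m%:Z.
have key : forall n, (M ^+ n.+1 %| c - sigma n.+1 ^+ 2)%Z /\
                     (M %| 2 * sigma n.+1 * u - 1)%Z.
  elim=> [|n [IH1 IH2]].
    split; last by rewrite -eqz_mod_dvd.
    by rewrite expr1 -eqz_mod_dvd eq_sym.
  rewrite hrec //.
  set e := c - sigma n.+1 ^+ 2; set s := sigma n.+1.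
  have hMe : (M %| e)%Z by exact: (@dvdz_pow_le M 1 n.+1 e isT IH1).
  split.
    have -> : c - (e * u + s) ^+ 2 = e * (- (2 * s * u - 1)) - (e * u) ^+ 2.
      rewrite /e; ring.
    rewrite -rpredN opprB; apply: rpredD; last first.
      by rewrite rpredN exprSr dvdz_mul // rpredN.
    rewrite exprMn; apply: dvdz_mulr.
    apply: (dvdz_pow_le _ _ (n.+1 + n.+1)%N); first by rewrite addnS ltnS leq_addr.
    by rewrite exprD expr2 dvdz_mul.
  have -> : 2 * (e * u + s) * u - 1 = (2 * s * u - 1) + e * (2 * u * u) by ring.
  by apply: rpredD => //; apply: dvdz_mulr.
have step : forall n, (M ^+ n.+1 %| sigma n.+2 - sigma n.+1)%Z.
  move=> n; rewrite hrec // addrK; apply: dvdz_mulr; exact: (key n).1.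
have diff : forall p q, (p <= q)%N -> (M ^+ p.+1 %| sigma q.+1 - sigma p.+1)%Z.
  move=> p q; elim: q => [|q IH].
    by rewrite leqn0 => /eqP ->; rewrite subrr dvdz0.
  rewrite leq_eqVlt => /orP [/eqP <-|]; first by rewrite subrr dvdz0.
  rewrite ltnS => hpq.
  have -> : sigma q.+2 - sigma p.+1 = (sigma q.+2 - sigma q.+1) + (sigma q.+1 - sigma p.+1) by ring.
  apply: rpredD; last exact: IH.
  by apply: (@dvdz_pow_le _ _ (q.+1)) => //; exact: step.
rewrite /madic_cauchy; split.
  by move=> n; rewrite /inDm denq_int coprime1n.
move=> eps eps0.
exists (Num.Def.archi_bound eps^-1) => p q hp hq.
set N := Num.Def.archi_bound eps^-1.
have hN : eps^-1 < N%:R by apply: archi_boundP; rewrite invr_ge0 ltW.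
have hd : (M ^+ N %| sigma p.+1 - sigma q.+1)%Z.
  case: (leqP p q) => hpq.
    rewrite -rpredN opprB; apply: (@dvdz_pow_le _ _ (p.+1)); first exact: leqW.
    exact: diff.
  apply: (@dvdz_pow_le _ _ (q.+1)); first exact: leqW.
  exact: diff (ltnW hpq).
have -> : madic_dist m (sigma p.+1)%:~R (sigma q.+1)%:~R
    = madic_norm m ((sigma p.+1 - sigma q.+1)%:~R).
  by rewrite /madic_dist intrB.
have hb := @inv_pow_bound m _ N m1 hd.
apply: (le_lt_trans hb).
have hm0 : (0 : rat) < m%:R ^+ N by rewrite exprn_gt0 // ltr0n.
rewrite invf_plt ?posrE //.
apply: (lt_le_trans hN).
rewrite -natrX ler_nat. apply: ltnW. exact: ltn_expl. Qed.
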